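(* Let $n\ge1$ and on $\mathbb{D}^n$ (coordinates $\alpha_0,\dots,\alpha_{n-1}$) use the Poisson bracket described in the context. Let $\Phi_n$ be the monic orthogonal polynomial on the unit circle and $\Phi_n^*$ its reversed polynomial. Then for all $z,w$, \[ \{\Phi_n(z),\Phi_n^*(w)\}=i\,w\,\frac{\Phi_n(z)\Phi_n^*(w)-\Phi_n(w)\Phi_n^*(z)}{z-w}. \]
   Context: Let $\rho_j=(1-|\alpha_j|^2)^{1/2}$; the Poisson bracket is $\{f,g\}=\sum_{j=0}^{n-1}i\rho_j^2\bigl(\frac{\partial f}{\partial\bar\alpha_j}\frac{\partial g}{\partial\alpha_j}-\frac{\partial f}{\partial\alpha_j}\frac{\partial g}{\partial\bar\alpha_j}\bigr)$ (Wirtinger derivatives), i.e. $\{\alpha_j,\alpha_k\}=0$, $\{\alpha_j,\bar\alpha_k\}=-i\rho_j^2\delta_{jk}$; $z,w$ are held fixed. $\Phi_0=1$, $\Phi_{k+1}(z)=z\Phi_k(z)-\bar\alpha_k\Phi_k^*(z)$, $\Phi_k^*(z)=z^k\overline{\Phi_k(1/\bar z)}$. The identity is an identity of polynomials in $z,w$. *)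

(* Defs.v *)
From HB Require Import structures.
From mathcomp Require Import all_boot all_order all_algebra all_field.
From mathcomp Require Import mpoly.
Set Implicit Arguments. Unset Strict Implicit. Unset Printing Implicit Defensive.
Import Order.TTheory GRing.Theory Num.Theory.
Local Open Scope ring_scope.

(* Functions of (alpha_0..alpha_{n-1}) that are polynomials in alpha_j and
   conj(alpha_j): the variable 'X_(lshift n j) stands for alpha_j and
   'X_(rshift n j) for conj(alpha_j) (treated as independent variables, as
   in the Wirtinger calculus). *)
Definition Fn (n : nat) := {mpoly algC[n + n]}.

Definition alphaI (n : nat) (j : 'I_n) : Fn n := 'X_(lshift n j).
Definition alphabI (n : nat) (j : 'I_n) : Fn n := 'X_(rshift n j).

Definition alphab (n : nat) (k : nat) : Fn n :=
  match @insub nat (fun k => k < n)%N _ k with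
  | Some j => alphabI (j : 'I_n) | None => 0 end.

(* complex conjugation of a function: conj(f)(alpha) = conj(f(alpha)),
   i.e. conjugate the coefficients and swap alpha_j <-> conj(alpha_j) *)
Definition swapI (n : nat) (i : 'I_(n + n)) : 'I_(n + n) :=
  match split i with inl j => rshift n j | inr j => lshift n j end.
Definition conjF (n : nat) (p : Fn n) : Fn n :=
  mmap (fun c : algC => (c^*)%:MP) (fun i => 'X_(swapI i)) p.

Definition dA (n : nat) (j : 'I_n) (p : Fn n) : Fn n := p^`M(lshift n j).
Definition dAb (n : nat) (j : 'I_n) (p : Fn n) : Fn n := p^`M(rshift n j).

Definition rho2 (n : nat) (j : 'I_n) : Fn n := 1 - alphaI j * alphabI j.

Definition pbF (n : nat) (f g : Fn n) : Fn n :=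
  \sum_(j < n) ('i%:MP * rho2 j * (dAb j f * dA j g - dA j f * dAb j g)).

(* reversed polynomial of degree k:  z^k conj(p(1/conj z)) *)
Definition revstar (n k : nat) (p : {poly Fn n}) : {poly Fn n} :=
  \poly_(i < k.+1) conjF p`_(k - i).

(* monic orthogonal polynomials by the Szego recursion (variable z) *)
Fixpoint Phi (n k : nat) : {poly Fn n} :=
  match k with
  | 0 => 1
  | k'.+1 => 'X * Phi n k' - (alphab n k')%:P * revstar k' (Phi n k')
  end.
Definition Phistar (n k : nat) : {poly Fn n} := revstar k (Phi n k).

(* Polynomials in the two fixed variables z, w: {poly {poly Fn n}},
   inner variable z, outer variable w. *)
Definition Zv (n : nat) : {poly {poly Fn n}} := ('X)%:P.
Definition Wv (n : nat) : {poly {poly Fn n}} := 'X.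
Definition atZ (n : nat) (p : {poly Fn n}) : {poly {poly Fn n}} := p%:P.
Definition atW (n : nat) (p : {poly Fn n}) : {poly {poly Fn n}} :=
  map_poly polyC p.

Definition dA2 (n : nat) (j : 'I_n) (P : {poly {poly Fn n}}) :=
  map_poly (map_poly (dA j)) P.
Definition dAb2 (n : nat) (j : 'I_n) (P : {poly {poly Fn n}}) :=
  map_poly (map_poly (dAb j)) P.
Definition pb (n : nat) (P Q : {poly {poly Fn n}}) : {poly {poly Fn n}} :=
  \sum_(j < n) (('i%:MP * rho2 j)%:P%:P *
                 (dAb2 j P * dA2 j Q - dA2 j P * dAb2 j Q)).

(* Main.v *)
Require Import Defs.
From HB Require Import structures.
From mathcomp Require Import all_boot all_order all_algebra all_field.
From mathcomp Require Import mpoly.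
From mathcomp Require Import ring zify.
Import Order.TTheory GRing.Theory Num.Theory.
Set Implicit Arguments. Unset Strict Implicit. Unset Printing Implicit Defensive.
Local Open Scope ring_scope.

Section A.
Variable n : nat.
Local Notation R := (Fn n).
Implicit Types (p q : R).

Lemma split_l (j : 'I_n) : split (lshift n j) = inl j.
Proof. exact: (unsplitK (inl j)). Qed.
Lemma split_r (j : 'I_n) : split (rshift n j) = inr j.
Proof. exact: (unsplitK (inr j)). Qed.

Lemma swapIK (i : 'I_(n+n)) : swapI (swapI i) = i.
Proof.
rewrite -[i](splitK i); case: (split i) => j; rewrite /swapI !unsplitK /= ?split_l ?split_r //.
Qed.

Definition cf : {rmorphism algC -> R} := (@mpolyC (n+n) algC \o (@Num.conj_op algC))%FUN.
Definition conjF' (p : R) : R := mmap cf (fun i => 'X_(swapI i)) p.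
Lemma conjFE (p : R) : conjF p = conjF' p. Proof. by []. Qed.

Lemma conjFD p q : conjF (p + q) = conjF p + conjF q.
Proof. by rewrite !conjFE /conjF' rmorphD. Qed.
Lemma conjFN p : conjF (- p) = - conjF p.
Proof. by rewrite !conjFE /conjF' rmorphN. Qed.
Lemma conjFB p q : conjF (p - q) = conjF p - conjF q.
Proof. by rewrite !conjFE /conjF' rmorphB. Qed.
Lemma conjFM p q : conjF (p * q) = conjF p * conjF q.
Proof. by rewrite !conjFE /conjF' rmorphM. Qed.
Lemma conjF0 : conjF (0 : R) = 0.
Proof. by rewrite !conjFE /conjF' rmorph0. Qed.
Lemma conjF1 : conjF (1 : R) = 1.
Proof. by rewrite !conjFE /conjF' rmorph1. Qed.
Lemma conjFC c : conjF (c%:MP : R) = (c^*)%:MP.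
Proof. by rewrite conjFE /conjF' mmapC. Qed.
Lemma conjFX (i : 'I_(n+n)) : conjF (n:=n) 'X_i = 'X_(swapI i).
Proof. by rewrite conjFE /conjF' mmapX mmap1U. Qed.
Lemma conjFXm m : conjF (n:=n) 'X_[m] = \prod_(i < n + n) 'X_(swapI i) ^+ m i.
Proof. by rewrite conjFE /conjF' mmapX. Qed.

Lemma conjFprod (F : 'I_(n+n) -> R) : conjF (\prod_i F i) = \prod_i conjF (F i).
Proof. rewrite conjFE /conjF' rmorph_prod //. Qed.
Lemma conjFX' (x : R) k : conjF (x ^+ k) = conjF x ^+ k.
Proof. by rewrite conjFE /conjF' rmorphXn. Qed.

Lemma conjFK p : conjF (conjF p) = p.
Proof.
elim/mpolyind: p => [|c m p _ _ ih]; first by rewrite !conjF0.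
rewrite !conjFD ih; congr (_ + _).
rewrite -mul_mpolyC !conjFM !conjFC conjCK conjFXm conjFprod.
rewrite [in RHS]mpolyXE_id; congr (_ * _); apply: eq_bigr => i _.
by rewrite conjFX' conjFX swapIK.
Qed.

Lemma swapI_r (j : 'I_n) : swapI (rshift n j) = lshift n j.
Proof. by rewrite /swapI split_r. Qed.

Lemma conjF_alphab (j : 'I_n) : conjF (alphabI j) = alphaI j.
Proof. by rewrite /alphabI conjFX swapI_r. Qed.

Lemma alphabE k (hk : (k < n)%N) : alphab n k = alphabI (Ordinal hk).
Proof. by rewrite /alphab insubT. Qed.

Lemma mderivXi (i i' : 'I_(n+n)) : ('X_i : R)^`M(i') = (i == i')%:R.
Proof.
rewrite -[X in X^`M(_)]/('X_[U_(i)] : R) mderivX mnm1E.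
case: eqP => [->|_]; last by rewrite scale0r.
have -> : (U_(i') - U_(i') = 0)%MM by apply/mnmP => k; rewrite mnmBE subnn mnm0E.
by rewrite mpolyX0 scale1r.
Qed.
End A.

Section B.
Variable n : nat.
Local Notation R := (Fn n).
Implicit Types (p q : {poly R}) (c : R).

Lemma size_revstar k p : (size (revstar k p) <= k.+1)%N.
Proof. exact: size_poly. Qed.

Lemma revstarS k p c : (size p <= k.+1)%N ->
  revstar k.+1 ('X * p - c%:P * revstar k p) = revstar k p - (conjF c)%:P * 'X * p.
Proof.
move=> sp; apply/polyP => i.
rewrite coefB -mulrA coefCM coefXM !coef_poly coefB coefXM coefCM coef_poly.
case: i => [|i] /=.
  by rewrite !subn0 ltnn mulr0 subr0 mulr0 subr0.
rewrite subSS; case: (ltngtP i k) => [lt|gt|->].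
- have -> : (i.+1 < k.+2)%N by lia.
  have -> : (i.+1 < k.+1)%N by lia.
  have -> : (k - i == 0)%N = false by apply/eqP; lia.
  have -> : (k - i < k.+1)%N by lia.
  have -> : (k - (k - i) = i)%N by lia.
  have -> : ((k - i).-1 = k - i.+1)%N by lia.
  by rewrite conjFB conjFM conjFK.
- have -> : (i.+1 < k.+2)%N = false by apply/negbTE; lia.
  have -> : (i.+1 < k.+1)%N = false by apply/negbTE; lia.
  rewrite nth_default ?mulr0 ?subr0 //; apply: leq_trans sp _; lia.
- rewrite subnn ltnSn ltnn eqxx conjFB conjFM conjFK conjF0 subn0.
  by [].
Qed.

Lemma size_Phi k : (size (Phi n k) <= k.+1)%N.
Proof.
elim: k => [|k ih] /=; first by rewrite size_poly1.
apply: leq_trans (size_polyD _ _) _; rewrite size_polyN geq_max; apply/andP; split.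
  apply: leq_trans (size_polyMleq _ _) _; rewrite size_polyX /=; exact: ih.
rewrite mul_polyC; apply: leq_trans (size_scale_leq _ _) _.
apply: leq_trans (size_revstar k _) _; exact: leqnSn.
Qed.

Lemma PhistarS k : Phistar n k.+1 = Phistar n k - (conjF (alphab n k))%:P * 'X * Phi n k.
Proof. by rewrite /Phistar /= revstarS // size_Phi. Qed.

Lemma Phistar0 : Phistar n 0 = 1.
Proof.
apply/polyP => i; rewrite coef_poly coef1; case: i => [|i] //=.
by rewrite coef1 /= conjF1.
Qed.
End B.

Definition isDer (A : nzRingType) (D : A -> A) := forall x y, D (x*y) = D x * y + x * D y.
Arguments isDer {A}.

Lemma isDer_map (A : nzRingType) (D : {additive A -> A}) : isDer D -> isDer (map_poly D).
Proof.
move=> hD p q; apply/polyP => i.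
rewrite coefD !coef_map !coefM raddf_sum -big_split /=; apply: eq_bigr => j _.
by rewrite hD !coef_map.
Qed.

Section C.
Variable n : nat.
Local Notation R := (Fn n).
Local Notation R2 := {poly {poly R}}.

Section G.
Variable i : 'I_(n+n).
Definition Dg (P : R2) : R2 := map_poly (map_poly (mderiv i)) P.
Lemma Dg_M : isDer Dg.
Proof.
have h1 : isDer (map_poly (mderiv i) : {poly R} -> {poly R}).
  by apply: (@isDer_map _ (mderiv i)) => u v; exact: mderivM.
move=> x y; rewrite /Dg; exact: (@isDer_map _ (map_poly (mderiv i)) h1).
Qed.
Lemma Dg_C (c : R) : Dg (c%:P%:P) = ((mderiv i c)%:P)%:P.
Proof. by rewrite /Dg map_polyC /= map_polyC. Qed.
Lemma mderiv1 : mderiv i (1 : R) = 0.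
Proof. by rewrite -mpolyC1 mderivC. Qed.
Lemma mapd_X : map_poly (mderiv i) ('X : {poly R}) = 0.
Proof.
apply/polyP => k; rewrite coef_map coefX coef0; case: (k == 1)%N.
  exact: mderiv1.
exact: mderiv0.
Qed.
Lemma Dg_Z : Dg (Zv n) = 0.
Proof. by rewrite /Dg /Zv /= map_polyC /= mapd_X. Qed.
Lemma Dg_W : Dg (Wv n) = 0.
Proof.
apply/polyP => k; rewrite /Dg /Wv coef_map coefX coef0; case: (k == 1)%N.
  by rewrite /= map_polyC /= mderiv1.
exact: raddf0.
Qed.
End G.

Lemma dA2E (j : 'I_n) : dA2 j = Dg (lshift n j). Proof. by []. Qed.
Lemma dAb2E (j : 'I_n) : dAb2 j = Dg (rshift n j). Proof. by []. Qed.

Lemma dgD i (P Q : R2) : Dg i (P + Q) = Dg i P + Dg i Q. Proof. rewrite /Dg; exact: raddfD. Qed.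
Lemma dgB i (P Q : R2) : Dg i (P - Q) = Dg i P - Dg i Q. Proof. rewrite /Dg; exact: raddfB. Qed.
Lemma dgN i (P : R2) : Dg i (- P) = - Dg i P. Proof. rewrite /Dg; exact: raddfN. Qed.
Lemma dg1 i : Dg i 1 = 0.
Proof. by rewrite -[1]polyC1 -polyC1 Dg_C -mpolyC1 mderivC !polyC0. Qed.

Lemma dX_alpha (i : 'I_(n+n)) (j : 'I_n) :
  mderiv i (alphaI j) = (lshift n j == i)%:R.
Proof. exact: mderivXi. Qed.
Lemma dX_alphab (i : 'I_(n+n)) (j : 'I_n) :
  mderiv i (alphabI j) = (rshift n j == i)%:R.
Proof. exact: mderivXi. Qed.

End C.

Lemma seal_ex (T : Type) (x : T) : {y : T | y = x}.
Proof. by exists x. Qed.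

Section Gen.
Variable K : comNzRingType.
Variables Da Db : K -> K.
Hypothesis DaD : forall x y, Da (x + y) = Da x + Da y.
Hypothesis DbD : forall x y, Db (x + y) = Db x + Db y.
Hypothesis DaM : forall x y, Da (x * y) = Da x * y + x * Da y.
Hypothesis DbM : forall x y, Db (x * y) = Db x * y + x * Db y.

Definition Tg (X Y : K) := Db X * Da Y - Da X * Db Y.
Definition Eg (c1 c2 c3 c4 X1 X2 Y1 Y2 : K) :=
  (Db c1 * X1 + Db c2 * X2) * (Da c3 * Y1 + Da c4 * Y2)
  - (Da c1 * X1 + Da c2 * X2) * (Db c3 * Y1 + Db c4 * Y2).

Lemma Tg_step c1 c2 c3 c4 X1 X2 Y1 Y2 :
  ((Da c1 = 0 /\ Db c1 = 0) /\ (Da c2 = 0 /\ Db c2 = 0) /\ (Da c3 = 0 /\ Db c3 = 0) /\ (Da c4 = 0 /\ Db c4 = 0)) \/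
  ((Da X1 = 0 /\ Db X1 = 0) /\ (Da X2 = 0 /\ Db X2 = 0) /\ (Da Y1 = 0 /\ Db Y1 = 0) /\ (Da Y2 = 0 /\ Db Y2 = 0)) ->
  Tg (c1 * X1 + c2 * X2) (c3 * Y1 + c4 * Y2) =
  c1 * c3 * Tg X1 Y1 + c1 * c4 * Tg X1 Y2 + c2 * c3 * Tg X2 Y1 +
  c2 * c4 * Tg X2 Y2 + Eg c1 c2 c3 c4 X1 X2 Y1 Y2.
Proof.
rewrite /Tg /Eg !DaD !DbD !DaM !DbM.
case=> [[[h1 h1'] [[h2 h2'] [[h3 h3'] [h4 h4']]]]|[[h1 h1'] [[h2 h2'] [[h3 h3'] [h4 h4']]]]].
  rewrite ?h1 ?h1' ?h2 ?h2' ?h3 ?h3' ?h4 ?h4'.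
  ring.
rewrite ?h1 ?h1' ?h2 ?h2' ?h3 ?h3' ?h4 ?h4'.
ring.
Qed.
End Gen.

Section E.
Variable n : nat.
Local Notation R := (Fn n).
Local Notation R2 := {poly {poly R}}.

Lemma kDA : unit. Proof. exact: tt. Qed.
Lemma kDB : unit. Proof. exact: tt. Qed.
Lemma kAa : unit. Proof. exact: tt. Qed.
Lemma kBb : unit. Proof. exact: tt. Qed.
Lemma kZs : unit. Proof. exact: tt. Qed.
Lemma kWs : unit. Proof. exact: tt. Qed.
Lemma kIi : unit. Proof. exact: tt. Qed.
Lemma kPk : unit. Proof. exact: tt. Qed.
Lemma kQk : unit. Proof. exact: tt. Qed.
Lemma kUk : unit. Proof. exact: tt. Qed.
Lemma kVk : unit. Proof. exact: tt. Qed.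
Lemma kpbs : unit. Proof. exact: tt. Qed.

Definition DA : 'I_n -> R2 -> R2 := match kDA with tt => fun j => dA2 j end.
Definition DB : 'I_n -> R2 -> R2 := match kDB with tt => fun j => dAb2 j end.
Lemma DAE j : DA j = dA2 j. Proof. by rewrite /DA; case: kDA. Qed.
Lemma DBE j : DB j = dAb2 j. Proof. by rewrite /DB; case: kDB. Qed.
Definition Aa : 'I_n -> R2 := match kAa with tt => fun j => (alphaI j)%:P%:P end.
Definition Bb : 'I_n -> R2 := match kBb with tt => fun j => (alphabI j)%:P%:P end.
Lemma AaE j : Aa j = (alphaI j)%:P%:P. Proof. by rewrite /Aa; case: kAa. Qed.
Lemma BbE j : Bb j = (alphabI j)%:P%:P. Proof. by rewrite /Bb; case: kBb. Qed.
Definition Zs : R2 := match kZs with tt => Zv n end.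
Definition Ws : R2 := match kWs with tt => Wv n end.
Lemma ZsE : Zs = Zv n. Proof. by rewrite /Zs; case: kZs. Qed.
Lemma WsE : Ws = Wv n. Proof. by rewrite /Ws; case: kWs. Qed.
Definition Ii : R2 := match kIi with tt => ('i%:MP : R)%:P%:P end.
Lemma IiE : Ii = ('i%:MP : R)%:P%:P. Proof. by rewrite /Ii; case: kIi. Qed.
Definition Pk : nat -> R2 := match kPk with tt => fun k => atZ (Phi n k) end.
Definition Qk : nat -> R2 := match kQk with tt => fun k => atZ (Phistar n k) end.
Definition Uk : nat -> R2 := match kUk with tt => fun k => atW (Phi n k) end.
Definition Vk : nat -> R2 := match kVk with tt => fun k => atW (Phistar n k) end.
Lemma PkE k : Pk k = atZ (Phi n k). Proof. by rewrite /Pk; case: kPk. Qed.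
Lemma QkE k : Qk k = atZ (Phistar n k). Proof. by rewrite /Qk; case: kQk. Qed.
Lemma UkE k : Uk k = atW (Phi n k). Proof. by rewrite /Uk; case: kUk. Qed.
Lemma VkE k : Vk k = atW (Phistar n k). Proof. by rewrite /Vk; case: kVk. Qed.
Definition pbs : R2 -> R2 -> R2 := match kpbs with tt => @pb n end.
Lemma pbsE : pbs = @pb n. Proof. by rewrite /pbs; case: kpbs. Qed.

Lemma DA_D j X Y : DA j (X + Y) = DA j X + DA j Y.
Proof. by rewrite DAE dA2E; exact: dgD. Qed.
Lemma DB_D j X Y : DB j (X + Y) = DB j X + DB j Y.
Proof. by rewrite DBE dAb2E; exact: dgD. Qed.
Lemma DA_M j X Y : DA j (X * Y) = DA j X * Y + X * DA j Y.
Proof. by rewrite DAE dA2E; exact: Dg_M. Qed.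
Lemma DB_M j X Y : DB j (X * Y) = DB j X * Y + X * DB j Y.
Proof. by rewrite DBE dAb2E; exact: Dg_M. Qed.
Lemma DA_N j X : DA j (- X) = - DA j X.
Proof. by rewrite DAE dA2E; exact: dgN. Qed.
Lemma DB_N j X : DB j (- X) = - DB j X.
Proof. by rewrite DBE dAb2E; exact: dgN. Qed.
Lemma DA_1 j : DA j 1 = 0.
Proof. by rewrite DAE dA2E; exact: dg1. Qed.
Lemma DB_1 j : DB j 1 = 0.
Proof. by rewrite DBE dAb2E; exact: dg1. Qed.
Lemma DA_Z j : DA j Zs = 0.
Proof. by rewrite DAE dA2E ZsE; exact: Dg_Z. Qed.
Lemma DB_Z j : DB j Zs = 0.
Proof. by rewrite DBE dAb2E ZsE; exact: Dg_Z. Qed.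
Lemma DA_W j : DA j Ws = 0.
Proof. by rewrite DAE dA2E WsE; exact: Dg_W. Qed.
Lemma DB_W j : DB j Ws = 0.
Proof. by rewrite DBE dAb2E WsE; exact: Dg_W. Qed.
Lemma DA_A j o : DA j (Aa o) = (o == j)%:R.
Proof. by rewrite DAE dA2E AaE Dg_C dX_alpha eq_lshift !polyC_natr. Qed.
Lemma DB_A j o : DB j (Aa o) = 0.
Proof. by rewrite DBE dAb2E AaE Dg_C dX_alpha eq_lrshift !polyC0. Qed.
Lemma DA_B j o : DA j (Bb o) = 0.
Proof. by rewrite DAE dA2E BbE Dg_C dX_alphab eq_rlshift !polyC0. Qed.
Lemma DB_B j o : DB j (Bb o) = (o == j)%:R.
Proof. by rewrite DBE dAb2E BbE Dg_C dX_alphab eq_rshift !polyC_natr. Qed.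

Definition Cs (j : 'I_n) : R2 := Ii * (1 - Aa j * Bb j).
Lemma pbsE2 X Y : pbs X Y = \sum_j Cs j * Tg (DA j) (DB j) X Y.
Proof.
rewrite pbsE /pb; apply: eq_bigr => j _.
rewrite /Cs /Tg IiE AaE BbE DAE DBE.
rewrite /rho2 !rmorphM !rmorphB !rmorph1 /= !rmorphM.
by [].
Qed.
End E.

Lemma lin4 (K : comNzRingType) (x11 x12 x21 x22 M e c13 c14 c23 c24 y11 y12 y21 y22 : K) :
  x11 * M = y11 -> x12 * M = y12 -> x21 * M = y21 -> x22 * M = y22 ->
  (c13 * x11 + c14 * x12 + c23 * x21 + c24 * x22 + e) * M =
  c13 * y11 + c14 * y12 + c23 * y21 + c24 * y22 + e * M.
Proof. by move=> h1 h2 h3 h4; rewrite !mulrDl -!mulrA h1 h2 h3 h4. Qed.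

Section F.
Variable n : nat.
Local Notation R := (Fn n).
Local Notation R2 := {poly {poly R}}.

Lemma atW_B (p q : {poly R}) : atW (p - q) = atW p - atW q.
Proof. by rewrite /atW rmorphB. Qed.
Lemma atW_M (p q : {poly R}) : atW (p * q) = atW p * atW q.
Proof. by rewrite /atW rmorphM. Qed.
Lemma atW_X : atW ('X : {poly R}) = Wv n.
Proof. by rewrite /atW map_polyX. Qed.
Lemma atW_C (c : R) : atW c%:P = c%:P%:P.
Proof. by rewrite /atW map_polyC. Qed.

Section Rec.
Variables (k : nat) (hk : (k < n)%N).
Let o : 'I_n := Ordinal hk.

Lemma PkS' : Pk n k.+1 = Zs n * Pk n k - Bb o * Qk n k.
Proof.
rewrite [Pk n k.+1]PkE [Phi n k.+1]/= PkE QkE ZsE BbE /atZ /Zv rmorphB !rmorphM alphabE.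
by [].
Qed.
Lemma QkS' : Qk n k.+1 = Qk n k - Aa o * Zs n * Pk n k.
Proof.
rewrite [Qk n k.+1]QkE PhistarS QkE PkE ZsE AaE /atZ /Zv rmorphB !rmorphM alphabE conjF_alphab.
by [].
Qed.
Lemma UkS' : Uk n k.+1 = Ws n * Uk n k - Bb o * Vk n k.
Proof.
rewrite [Uk n k.+1]UkE [Phi n k.+1]/= atW_B !atW_M atW_X atW_C UkE VkE WsE BbE alphabE.
by [].
Qed.
Lemma VkS' : Vk n k.+1 = Vk n k - Aa o * Ws n * Uk n k.
Proof.
rewrite [Vk n k.+1]VkE PhistarS atW_B !atW_M atW_X atW_C VkE UkE WsE AaE alphabE conjF_alphab.
by [].
Qed.
Lemma PkS : Pk n k.+1 = Zs n * Pk n k + (- Bb o) * Qk n k.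
Proof. rewrite PkS'; ring. Qed.
Lemma QkS : Qk n k.+1 = 1 * Qk n k + (- (Aa o * Zs n)) * Pk n k.
Proof. rewrite QkS'; ring. Qed.
Lemma UkS : Uk n k.+1 = Ws n * Uk n k + (- Bb o) * Vk n k.
Proof. rewrite UkS'; ring. Qed.
Lemma VkS : Vk n k.+1 = 1 * Vk n k + (- (Aa o * Ws n)) * Uk n k.
Proof. rewrite VkS'; ring. Qed.
End Rec.

Lemma Pk0 : Pk n 0 = 1. Proof. by rewrite PkE /atZ /= rmorph1. Qed.
Lemma Uk0 : Uk n 0 = 1. Proof. by rewrite UkE /atW /= rmorph1. Qed.
Lemma Qk0 : Qk n 0 = 1. Proof. by rewrite QkE /atZ Phistar0 rmorph1. Qed.
Lemma Vk0 : Vk n 0 = 1. Proof. by rewrite VkE /atW Phistar0 rmorph1. Qed.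

End F.

Section G.
Variable n : nat.
Local Notation R := (Fn n).
Local Notation R2 := {poly {poly R}}.

Definition cz (j : 'I_n) (c : R2) := DA j c = 0 /\ DB j c = 0.
Definition Ind (k : nat) (X : R2) := forall j : 'I_n, (k <= j)%N -> cz j X.
Definition Ej (j : 'I_n) := Eg (DA j) (DB j).

Lemma T_step j c1 c2 c3 c4 X1 X2 Y1 Y2 :
  ((cz j c1 /\ cz j c2 /\ cz j c3 /\ cz j c4) \/
   (cz j X1 /\ cz j X2 /\ cz j Y1 /\ cz j Y2)) ->
  Tg (DA j) (DB j) (c1 * X1 + c2 * X2) (c3 * Y1 + c4 * Y2) =
  c1 * c3 * Tg (DA j) (DB j) X1 Y1 + c1 * c4 * Tg (DA j) (DB j) X1 Y2 +
  c2 * c3 * Tg (DA j) (DB j) X2 Y1 +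
  c2 * c4 * Tg (DA j) (DB j) X2 Y2 + Ej j c1 c2 c3 c4 X1 X2 Y1 Y2.
Proof.
move=> h.
have := (@Tg_step _ (DA j) (DB j) (@DA_D _ j) (@DB_D _ j) (@DA_M _ j) (@DB_M _ j)).
move=> /(_ c1 c2 c3 c4 X1 X2 Y1 Y2 h).
exact.
Qed.

Lemma pb_step (o : 'I_n) c1 c2 c3 c4 X1 X2 Y1 Y2 :
  Ind o X1 -> Ind o X2 -> Ind o Y1 -> Ind o Y2 ->
  (forall j, j != o -> cz j c1 /\ cz j c2 /\ cz j c3 /\ cz j c4) ->
  pbs (c1 * X1 + c2 * X2) (c3 * Y1 + c4 * Y2) =
  c1 * c3 * pbs X1 Y1 + c1 * c4 * pbs X1 Y2 + c2 * c3 * pbs X2 Y1 +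
  c2 * c4 * pbs X2 Y2 + Cs o * Ej o c1 c2 c3 c4 X1 X2 Y1 Y2.
Proof.
move=> i1 i2 i3 i4 hc; rewrite !pbsE2.
have hT : forall j, Tg (DA j) (DB j) (c1 * X1 + c2 * X2) (c3 * Y1 + c4 * Y2) =
  c1 * c3 * Tg (DA j) (DB j) X1 Y1 + c1 * c4 * Tg (DA j) (DB j) X1 Y2 +
  c2 * c3 * Tg (DA j) (DB j) X2 Y1 +
  c2 * c4 * Tg (DA j) (DB j) X2 Y2 + Ej j c1 c2 c3 c4 X1 X2 Y1 Y2.
  move=> j.
  have h : ((cz j c1 /\ cz j c2 /\ cz j c3 /\ cz j c4) \/
   (cz j X1 /\ cz j X2 /\ cz j Y1 /\ cz j Y2)).
    case: (eqVneq j o) => [->|ne]; last by left; exact: hc.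
    by right; split; [exact: i1|split; [exact: i2|split; [exact: i3|exact: i4]]].
  exact: (T_step h).
rewrite (eq_bigr (fun j => c1 * c3 * (Cs j * Tg (DA j) (DB j) X1 Y1) + c1 * c4 * (Cs j * Tg (DA j) (DB j) X1 Y2)
   + c2 * c3 * (Cs j * Tg (DA j) (DB j) X2 Y1) + c2 * c4 * (Cs j * Tg (DA j) (DB j) X2 Y2) + Cs j * Ej j c1 c2 c3 c4 X1 X2 Y1 Y2)); last first.
  move=> j _; rewrite hT.
  move: (Cs j) (Tg (DA j) (DB j) X1 Y1) (Tg (DA j) (DB j) X1 Y2) (Tg (DA j) (DB j) X2 Y1) (Tg (DA j) (DB j) X2 Y2) (Ej j c1 c2 c3 c4 X1 X2 Y1 Y2) => *.
  ring.
rewrite !big_split /= -!mulr_sumr.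
congr (_ + _).
rewrite (bigD1 o) //= big1 ?addr0 // => j ne.
have [[h1 h1'] [[h2 h2'] [[h3 h3'] [h4 h4']]]] := hc j ne.
by rewrite /Ej /Eg h1 h1' h2 h2' h3 h3' h4 h4' !mul0r !add0r subrr mulr0.
Qed.

Lemma Ind_step (o : 'I_n) c1 c2 X1 X2 :
  Ind o X1 -> Ind o X2 ->
  (forall j, j != o -> cz j c1 /\ cz j c2) ->
  Ind o.+1 (c1 * X1 + c2 * X2).
Proof.
move=> i1 i2 hc j hj.
have ne : j != o by apply/eqP => e; move: hj; rewrite e ltnn.
have hj' : (o <= j)%N by apply: ltnW.
have [[h1 h1'] [h2 h2']] := hc j ne.
have [g1 g1'] := i1 j hj'; have [g2 g2'] := i2 j hj'.
rewrite /cz !DA_D !DB_D !DA_M !DB_M h1 h1' h2 h2' g1 g1' g2 g2'.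
by rewrite !mul0r !mulr0 !addr0.
Qed.

Lemma cz_Z j : cz j (Zs n). Proof. by split; [exact: DA_Z|exact: DB_Z]. Qed.
Lemma cz_W j : cz j (Ws n). Proof. by split; [exact: DA_W|exact: DB_W]. Qed.
Lemma cz_1 j : cz j 1. Proof. by split; [exact: DA_1|exact: DB_1]. Qed.
Lemma cz_Bb j o : j != o -> cz j (- Bb o).
Proof. by move=> ne; rewrite /cz DA_N DB_N DA_B DB_B eq_sym (negbTE ne) oppr0. Qed.
Lemma cz_AaX j o X : j != o -> cz j X -> cz j (- (Aa o * X)).
Proof.
move=> ne [h h']; rewrite /cz DA_N DB_N DA_M DB_M DA_A DB_A eq_sym (negbTE ne) h h'.
by rewrite !mul0r !mulr0 !addr0 oppr0.
Qed.

Record Inv (k : nat) : Prop := MkInv {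
  iP : Ind k (Pk n k); iQ : Ind k (Qk n k); iU : Ind k (Uk n k); iV : Ind k (Vk n k);
  e1 : pbs (Pk n k) (Uk n k) * (Zs n - Ws n) = 0;
  e2 : pbs (Qk n k) (Vk n k) * (Zs n - Ws n) = 0;
  e3 : pbs (Pk n k) (Vk n k) * (Zs n - Ws n) = Ii n * Ws n * (Pk n k * Vk n k - Uk n k * Qk n k);
  e4 : pbs (Qk n k) (Uk n k) * (Zs n - Ws n) = - (Ii n * Zs n * (Pk n k * Vk n k - Uk n k * Qk n k)) }.

Lemma pbs11 : pbs (n:=n) 1 1 = 0.
Proof.
rewrite pbsE2 big1 // => j _; rewrite /Tg DA_1 DB_1.
move: (Cs j) => c; ring.
Qed.

Lemma Inv0 : Inv 0.
Proof.
have i1 : Ind 0 1 by move=> j _; exact: cz_1.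
constructor.
- by rewrite Pk0.
- by rewrite Qk0.
- by rewrite Uk0.
- by rewrite Vk0.
- rewrite Pk0 Uk0 pbs11; ring.
- rewrite Qk0 Vk0 pbs11; ring.
- rewrite Pk0 Vk0 Uk0 Qk0 pbs11; ring.
- rewrite Pk0 Vk0 Uk0 Qk0 pbs11; ring.
Qed.

End G.

Section H.
Variable n : nat.
Local Notation R := (Fn n).
Local Notation R2 := {poly {poly R}}.

Lemma tR : (true%:R : R2) = 1. Proof. by []. Qed.

Lemma InvS k (hk : (k < n)%N) : Inv n k -> Inv n k.+1.
Proof.
move=> [iP iQ iU iV e1 e2 e3 e4].
pose o : 'I_n := Ordinal hk.
have ioP : Ind o (Pk n k) by exact: iP.
have ioQ : Ind o (Qk n k) by exact: iQ.
have ioU : Ind o (Uk n k) by exact: iU.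
have ioV : Ind o (Vk n k) by exact: iV.
have cZ j : cz j (Zs n) by exact: cz_Z.
have cW j : cz j (Ws n) by exact: cz_W.
have c1 (j : 'I_n) : cz j 1 by exact: cz_1.
have cB j : j != o -> cz j (- Bb o) by exact: cz_Bb.
have cAZ j : j != o -> cz j (- (Aa o * Zs n)) by move=> ne; exact: cz_AaX ne (cZ j).
have cAW j : j != o -> cz j (- (Aa o * Ws n)) by move=> ne; exact: cz_AaX ne (cW j).
rewrite /= in e1 e2 e3 e4.
constructor.
- rewrite (PkS hk).
  apply: (Ind_step ioP ioQ).
  move=> j ne.
  split.
  exact: cZ.
  exact: (cB j ne).
- rewrite (QkS hk).
  apply: (Ind_step ioQ ioP).
  move=> j ne.
  split.
  exact: (c1 j).
  exact: (cAZ j ne).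
- rewrite (UkS hk).
  apply: (Ind_step ioU ioV).
  move=> j ne.
  split.
  exact: (cW j).
  exact: (cB j ne).
- rewrite (VkS hk).
  apply: (Ind_step ioV ioU).
  move=> j ne.
  split.
  exact: (c1 j).
  exact: (cAW j ne).
- rewrite (PkS hk).
  rewrite (UkS hk).
  rewrite (pb_step ioP ioQ ioU ioV (fun j ne => conj (cZ j) (conj (cB j ne) (conj (cW j) (cB j ne))))).
  rewrite /Ej /Eg ?DA_N ?DB_N ?DA_M ?DB_M ?DA_Z ?DB_Z ?DA_W ?DB_W ?DA_1 ?DB_1 ?DA_A ?DB_A ?DA_B ?DB_B ?eqxx ?tR.
  rewrite (@lin4 _ _ _ _ _ _ _ _ _ _ _ _ _ _ _ e1 e3 e4 e2) /Cs.
  rewrite /o.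
  ring.
- rewrite (QkS hk) (VkS hk).
  rewrite (pb_step ioQ ioP ioV ioU (fun j ne => conj (c1 j) (conj (cAZ j ne) (conj (c1 j) (cAW j ne))))).
  rewrite /Ej /Eg ?DA_N ?DB_N ?DA_M ?DB_M ?DA_Z ?DB_Z ?DA_W ?DB_W ?DA_1 ?DB_1 ?DA_A ?DB_A ?DA_B ?DB_B ?eqxx ?tR.
  rewrite (@lin4 _ _ _ _ _ _ _ _ _ _ _ _ _ _ _ e2 e4 e3 e1) /Cs.
  rewrite /o.
  ring.
- rewrite (PkS hk) (VkS hk) (UkS hk) (QkS hk).
  rewrite (pb_step ioP ioQ ioV ioU (fun j ne => conj (cZ j) (conj (cB j ne) (conj (c1 j) (cAW j ne))))).
  rewrite /Ej /Eg ?DA_N ?DB_N ?DA_M ?DB_M ?DA_Z ?DB_Z ?DA_W ?DB_W ?DA_1 ?DB_1 ?DA_A ?DB_A ?DA_B ?DB_B ?eqxx ?tR.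
  rewrite (@lin4 _ _ _ _ _ _ _ _ _ _ _ _ _ _ _ e3 e1 e2 e4) /Cs.
  rewrite /o.
  ring.
- rewrite (QkS hk) (UkS hk) (PkS hk) (VkS hk).
  rewrite (pb_step ioQ ioP ioU ioV (fun j ne => conj (c1 j) (conj (cAZ j ne) (conj (cW j) (cB j ne))))).
  rewrite /Ej /Eg ?DA_N ?DB_N ?DA_M ?DB_M ?DA_Z ?DB_Z ?DA_W ?DB_W ?DA_1 ?DB_1 ?DA_A ?DB_A ?DA_B ?DB_B ?eqxx ?tR.
  rewrite (@lin4 _ _ _ _ _ _ _ _ _ _ _ _ _ _ _ e4 e2 e1 e3) /Cs.
  rewrite /o.
  ring.
Qed.

Lemma Inv_le k : (k <= n)%N -> Inv n k.
Proof.
elim: k => [|k ih] hk; first exact: Inv0.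
exact: (InvS hk (ih (ltnW hk))).
Qed.
End H.

Theorem theorem13p5 (n : nat) (hn : (1 <= n)%N) :
  pb (atZ (Phi n n)) (atW (Phistar n n)) * (Zv n - Wv n) =
  ('i%:MP)%:P%:P * Wv n *
    (atZ (Phi n n) * atW (Phistar n n) - atW (Phi n n) * atZ (Phistar n n)).
Proof.
have h := e3 (Inv_le (leqnn n)).
rewrite pbsE !PkE !QkE !UkE !VkE ZsE WsE IiE in h.
exact: h.
Qed.
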